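(* For every integer $n\ge 0$, $$\sum_{k=0}^n(-1)^k\binom nk C_k\binom{2n-2k}{n-k}=\binom{n}{\lfloor n/2\rfloor}^2 .$$
   Context: $C_k=\binom{2k}{k}\frac{1}{k+1}$ denotes the $k$-th Catalan number. *)

(* Defs.v *)
From mathcomp Require Import all_boot all_order all_algebra.
Set Implicit Arguments. Unset Strict Implicit. Unset Printing Implicit Defensive.

(* k-th Catalan number C_k = binom(2k,k)/(k+1); the division is exact. *)
Definition catalan (k : nat) : nat := 'C(k.*2, k) %/ k.+1.

(* Main.v *)
Require Import Defs.
From mathcomp Require Import all_boot all_order all_algebra ring zify.
Import GRing.Theory Num.Theory.
Local Open Scope ring_scope.

Lemma coef_lin (R : comNzRingType) (a b : R) m i :
  ((a%:P + b%:P * 'X) ^+ m)`_i = a ^+ (m - i) * b ^+ i *+ 'C(m, i).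
Proof.
elim: m i => [|m IH] i.
  rewrite expr0 coef1; case: i => [|i] /=; first by rewrite !expr0 mulr1.
  by rewrite mulr0n.
rewrite exprSr mulrDr coefD coefMC mulrA coefMX coefMC.
case: i => [|i] /=.
  by rewrite IH !bin0 !mulr1n !expr0 !mulr1 subn0 exprSr addr0.
rewrite !IH binS mulrnDr.
have [lt_im | le_mi] := ltnP i m.
  rewrite subSS; have -> : (m - i = (m - i.+1).+1)%N by lia.
  rewrite !mulrnAl; congr (_ *+ _ + _ *+ _); rewrite !exprS; ring.
rewrite bin_small ?ltnS // !mulr0n add0r subSS.
have -> : (m - i = 0)%N by apply/eqP; rewrite subn_eq0.
rewrite mulrnAl !expr0 exprSr mul1r mulrA mul1r.
by rewrite mul0r add0r.
Qed.

Lemma coef_1X (R : comNzRingType) m i : (((1 : {poly R}) + 'X) ^+ m)`_i = ('C(m, i))%:R.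
Proof.
have := @coef_lin R 1 1 m i.
by rewrite polyC1 mul1r !expr1n mul1r.
Qed.

Lemma catalanE k : (catalan k + (if k == 0 then 0 else 'C(k.*2, k.-1)) = 'C(k.*2, k))%N.
Proof.
case: k => [|k] //=.
rewrite /catalan.
have h := mul_bin_left (k.+1).*2 k.
have e : ((k.+1).*2 - k = k.+2)%N by lia.
rewrite e in h.
set A := 'C((k.+1).*2, k.+1) in h *; set B := 'C((k.+1).*2, k) in h *.
have hAB : (A = k.+2 * (A - B))%N by nia.
rewrite [X in (X %/ _)%N]hAB mulKn //; nia.
Qed.

Lemma coef_sign (R : nzRingType) i (p : {poly R}) k : ((-1) ^+ i * p)`_k = (-1) ^+ i * p`_k.
Proof. by rewrite (_ : (-1) ^+ i = ((-1) ^+ i)%:P) ?coefCM // rmorphXn rmorphN1. Qed.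

Lemma inner_coef n i : (i <= n)%N ->
  (((-1) ^+ i * ('X ^+ (n - i) * ((1 + 'X) ^+ i.*2 * (1 - 'X)) * ('C((n - i).*2, n - i))%:R))
     *+ 'C(n, i) : {poly int})`_n
  = (-1) ^+ i * ('C(n, i) * catalan i * 'C((n - i).*2, n - i))%:R.
Proof.
move=> hi.
rewrite coefMn coef_sign mulr_natr coefMn coefXnM ltnNge leq_subr /= subKn //.
rewrite mulrBr mulr1 coefB coefMX !coef_1X -(catalanE i).
rewrite -[_ *+ 'C(n, i)]mulr_natr -[_ *+ 'C((n - i).*2, n - i)]mulr_natr !natrM.
case: (i == 0) => /=; rewrite ?addn0 ?subr0 ?natrD ?addrK; ring.
Qed.

Lemma term_coef n i : (i <= n)%N ->
  (((-1) ^+ i * (('X ^+ (n - i) * ((1 + 'X) ^+ (i.*2) * (1 - 'X)))%:P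
         * ('X ^+ i * (1 + 'X) ^+ ((n - i).*2)))) *+ 'C(n, i) : {poly {poly int}})`_n`_n
  = (-1) ^+ i * ('C(n, i) * catalan i * 'C((n - i).*2, n - i))%:R.
Proof.
move=> hi.
rewrite coefMn coef_sign coefCM coefXnM ltnNge hi /= coef_1X.
exact (inner_coef n i hi).
Qed.

Lemma tcoef n m c : ((1 - 'X) * (((-1) ^+ n * 'X ^+ m) *+ c) : {poly int})`_n
  = ((-1) ^+ n * ((n == m)%:R - (n == m.+1)%:R)) *+ c.
Proof.
have e : ((1 - 'X) * ((-1) ^+ n * 'X ^+ m) : {poly int}) = (-1) ^+ n * 'X ^+ m - (-1) ^+ n * 'X ^+ m.+1.
  by rewrite exprS; ring.
by rewrite mulrnAr coefMn e coefB !coef_sign !coefXn mulrBr.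
Qed.

Lemma final_coef n :
  ((1 - 'X) * \sum_(j < n.+1) (((-1) ^+ n * 'X ^+ ((n - j).*2)) *+ ('C(n, j) * 'C(n, j))) : {poly int})`_n
  = ('C(n, n./2) ^ 2)%:R.
Proof.
have hn := odd_double_half n.
have hh : (n./2 <= n)%N by rewrite -{2}hn; lia.
have hj0 : (n - n./2 < n.+1)%N by rewrite ltnS leq_subr.
rewrite mulr_sumr coef_sum (bigD1 (Ordinal hj0)) //= big1 ?addr0.
  rewrite tcoef subKn // bin_sub // -signr_odd.
  case: (odd n) hn => /= hn.
    have -> : (n == (n./2).*2) = false by apply/eqP; lia.
    have -> : (n == (n./2).*2.+1) = true by apply/eqP; lia.
    rewrite expr1 sub0r mulrN1 opprK. by rewrite mulnn.
  have -> : (n == (n./2).*2) = true by apply/eqP; lia.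
  have -> : (n == (n./2).*2.+1) = false by apply/eqP; lia.
  rewrite expr0 subr0 mulr1. by rewrite mulnn.
move=> [j hj] /= hne.
rewrite tcoef.
have hne' : j <> (n - n./2)%N by move=> e; apply/negP: hne; rewrite negbK; apply/eqP/val_inj.
have -> : (n == (n - j).*2) = false by apply/eqP; case: (odd n) hn => /= hn; lia.
have -> : (n == ((n - j).*2).+1) = false by apply/eqP; case: (odd n) hn => /= hn; lia.
by rewrite subrr mulr0 mul0rn.
Qed.

Lemma outer_coef n :
  (((('X : {poly int})%:P + (-1)%:P * 'X) ^+ n * (1%:P + (- 'X)%:P * 'X) ^+ n)
     : {poly {poly int}})`_n
  = \sum_(j < n.+1) (((-1) ^+ n * 'X ^+ ((n - j).*2)) *+ ('C(n, j) * 'C(n, j))).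
Proof.
rewrite coefM; apply: eq_bigr => [[j hj]] _ /=.
have hj' : (j <= n)%N by rewrite -ltnS.
rewrite !coef_lin subKn // bin_sub // expr1n mul1r exprNn -addnn exprD.
rewrite mulrnAl mulrnAr -mulrnA.
have e : (-1) ^+ n = (-1) ^+ j * (-1) ^+ (n - j) :> {poly int} by rewrite -exprD subnKC.
rewrite e; congr (_ *+ _).
have f : (- 'X : {poly int}) ^+ (n - j) = (-1) ^+ (n - j) * 'X ^+ (n - j) by exact: exprNn.
rewrite f expr1n; ring.
Qed.

Theorem mainTheorem1 (n : nat) :
  \sum_(0 <= k < n.+1)
     (-1) ^+ k * ('C(n, k) * catalan k * 'C((n - k).*2, n - k))%:R
  = ('C(n, n./2) ^ 2)%:R :> int.
Proof.
pose x : {poly {poly int}} := ('X)%:P.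
pose y : {poly {poly int}} := 'X.
pose Q : {poly {poly int}} := (1 - x) * (x * (1 + y) ^+ 2 - y * (1 + x) ^+ 2) ^+ n.
have C1 : (Q`_n)`_n = \sum_(0 <= k < n.+1)
     (-1) ^+ k * ('C(n, k) * catalan k * 'C((n - k).*2, n - k))%:R.
  rewrite /Q exprBn mulr_sumr coef_sum coef_sum big_mkord.
  apply: eq_bigr => i _.
  have hi : (i <= n)%N by rewrite -ltnS.
  have -> : (1 - x) * ((-1) ^+ i * (x * (1 + y) ^+ 2) ^+ (n - i) * (y * (1 + x) ^+ 2) ^+ i *+ 'C(n, i))
     = ((-1) ^+ i * (('X ^+ (n - i) * ((1 + 'X) ^+ (i.*2) * (1 - 'X)))%:P
         * ('X ^+ i * (1 + 'X) ^+ ((n - i).*2)))) *+ 'C(n, i).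
    rewrite mulrnAr; congr (_ *+ _); rewrite -!mul2n !exprM /x /y.
    rewrite !polyCM !polyCB !polyC_exp !polyCD !polyC1 !exprMn; ring.
  exact: term_coef.
rewrite -C1.
have eQ : Q = (1 - 'X)%:P * (((('X : {poly int})%:P + (-1)%:P * 'X) ^+ n * (1%:P + (- 'X)%:P * 'X) ^+ n)).
  by rewrite /Q /x /y -exprMn polyCB !polyCN polyC1; congr (_ * _ ^+ _); ring.
rewrite eQ coefCM outer_coef.
exact: final_coef.
Qed.
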